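(* Let $\Gamma=([n],E)$ be a connected simple graph and let $M\subseteq[n]$ be a subset of maximal cardinality such that the induced subgraph $\Gamma|_M$ is isomorphic to the path $L_{|M|}$. Then for every integer $k\ge|M|$, $\Psi^k_q(\Gamma^{\mathbf 1})=\Psi^{|M|-1}_q(\Gamma^{\mathbf 1})$.
   Context: $L_r$ is the path graph on $r$ vertices. Decorated graphs: a decorated graph $\Gamma^w=(V,E,w)$ is a finite simple graph with $w:E\to\{1,2,\dots\}$; $\Gamma^{\mathbf 1}$ is $\Gamma$ with $w\equiv1$. For $S\subseteq V$: $\Gamma^w|_S$ is the induced decorated subgraph on $S$; $\Gamma^w/S$ is the decorated graph on $V\setminus S$ with an edge $uv$ whenever $\Gamma$ has a path from $u$ to $v$ with all internal vertices in $S$ (a direct edge counting as a path without internal vertices), decorated by the minimum over such paths of the sum of decorations along it. For an integer $m\ge0$, $\mathrm{pr}_m$ deletes all edges of decoration $>m$. Let $\mathcal{G}^{W,m}$ be the Hopf algebra spanned by isomorphism classes of decorated graphs (graded by number of vertices), with product disjoint union and coproduct $\Delta_m(\Gamma^w)=\sum_{S\subseteq V}\mathrm{pr}_m(\Gamma^w|_S)\otimes\mathrm{pr}_m(\Gamma^w/S)$. Let $\zeta_q(\Gamma^w)=q^{|V|-c(\Gamma)}$, $c$ = number of connected components. For $\alpha=(\alpha_1,\dots,\alpha_k)\models n$, $M_\alpha=\sum_{i_1<\cdots<i_k}x_{i_1}^{\alpha_1}\cdots x_{i_k}^{\alpha_k}$. Define $\Psi^m_q(\Gamma^w)=\sum_{\alpha\models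 n}(\zeta_q)_\alpha(\Gamma^w)M_\alpha$ with $(\zeta_q)_\alpha=\zeta_q^{\otimes k}\circ(p_{\alpha_1}\otimes\cdots\otimes p_{\alpha_k})\circ\Delta_m^{(k-1)}$ ($p_i$ projection to degree $i$, $\Delta_m^{(k-1)}$ iterated coproduct), i.e. the unique morphism of combinatorial Hopf algebras $(\mathcal{G}^{W,m},\zeta_q)\to(\mathcal{Q}Sym,\zeta)$. *)

(* Defs.v *)
From mathcomp Require Import all_boot all_algebra.
Set Implicit Arguments. Unset Strict Implicit. Unset Printing Implicit Defensive.
Import GRing.Theory.
Local Open Scope ring_scope.

(* A decorated graph on an ambient finite type T: vertex set dV, and a
   decoration dw x y (0 = no edge, otherwise the decoration, >= 1).
   Edges are only meaningful between distinct vertices of dV. *)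
Record dgraph (T : finType) := DGraph { dV : {set T}; dw : T -> T -> nat }.

Section DG.
Variable T : finType.

Definition dedge (G : dgraph T) : rel T :=
  fun x y => [&& x \in dV G, y \in dV G, x != y & (0 < dw G x y)%N].

Definition ncomp (G : dgraph T) : nat := n_comp (dedge G) (mem (dV G)).

Definition zeta (R : comNzRingType) (q : R) (G : dgraph T) : R :=
  q ^+ (#|dV G| - ncomp G).

Definition induced (G : dgraph T) (S : {set T}) : dgraph T :=
  DGraph (dV G :&: S)
    (fun x y => if (x \in dV G :&: S) && (y \in dV G :&: S) then dw G x y else 0%N).

Definition path_edges (u : T) (p : seq T) (v : T) : seq (T * T) :=
  let s := u :: rcons p v in zip s (behead s).

Definition path_valid (G : dgraph T) u p v : bool :=
  all (fun e => (0 < dw G e.1 e.2)%N) (path_edges u p v).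

Definition path_weight (G : dgraph T) u p v : nat :=
  sumn [seq dw G e.1 e.2 | e <- path_edges u p v].

Definition interiors (S : {set T}) : seq (seq T) :=
  flatten [seq map val (enum [pred t : k.-tuple T | uniq t && all (fun x => x \in S) t])
          | k <- iota 0 #|T|.+1].

Definition path_weights (G : dgraph T) (S : {set T}) u v : seq nat :=
  [seq path_weight G u p v | p <- interiors (dV G :&: S) & path_valid G u p v].

Definition seqmin (s : seq nat) : nat :=
  if s is c :: cs then foldr minn c cs else 0%N.

Definition quot (G : dgraph T) (S : {set T}) : dgraph T :=
  DGraph (dV G :\: S)
    (fun x y => if [&& x \in dV G :\: S, y \in dV G :\: S & x != y]
                then seqmin (path_weights G S x y) else 0%N).

Definition pr (m : nat) (G : dgraph T) : dgraph T :=
  DGraph (dV G) (fun x y => if (dw G x y <= m)%N then dw G x y else 0%N).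

(* (zeta_q)_alpha = zeta_q^{(x)k} o (p_{a1} (x) ... (x) p_{ak}) o Delta_m^{(k-1)},
   with Delta^{(k-1)} = (id (x) Delta^{(k-2)}) o Delta and Delta^{(0)} = id. *)
Fixpoint zeta_comp (R : comNzRingType) (q : R) (m : nat) (al : seq nat) (G : dgraph T) : R :=
  match al with
  | [::] => (#|dV G| == 0%N)%:R
  | a :: al' =>
      match al' with
      | [::] => (#|dV G| == a)%:R * zeta q G
      | _ :: _ =>
          \sum_(S : {set T} | (S \subset dV G) && (#|S| == a))
             zeta q (pr m (induced G S)) * zeta_comp q m al' (pr m (quot G S))
      end
  end.

End DG.

Definition is_composition (n : nat) (al : seq nat) : bool :=
  all (fun a => 0 < a)%N al && (sumn al == n).

(* Psi^m_q(Gamma^w), represented by its coefficients in the monomial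
   quasisymmetric basis: alpha |-> (zeta_q)_alpha(Gamma^w) for alpha |= n,
   and 0 on sequences that are not compositions of n. *)
Definition Psi (T : finType) (R : comNzRingType) (m : nat) (q : R) (G : dgraph T)
  : seq nat -> R :=
  fun al => if is_composition #|dV G| al then zeta_comp q m al G else 0.

Definition dec_one (T : finType) (e : rel T) : dgraph T :=
  DGraph [set: T] (fun x y => nat_of_bool (e x y)).

Definition simple_graph (T : finType) (e : rel T) : Prop :=
  (forall x, ~~ e x x) /\ (forall x y, e x y = e y x).

Definition connected_graph (T : finType) (e : rel T) : Prop :=
  (0 < #|T|)%N /\ (forall x y, connect e x y).

Definition path_graph (r : nat) : rel 'I_r :=
  fun i j => (i.+1 == j)%N || (j.+1 == i)%N.

Definition induces_path (T : finType) (e : rel T) (M : {set T}) : Prop :=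
  exists f : 'I_#|M| -> T,
    [/\ injective f, (forall i, f i \in M) &
        (forall i j, e (f i) (f j) = path_graph i j)].

(* Main.v *)
Require Import Defs.
From mathcomp Require Import all_boot all_algebra.
From mathcomp Require Import zify.
From Stdlib Require Import FunctionalExtensionality.
Set Implicit Arguments. Unset Strict Implicit. Unset Printing Implicit Defensive.

Section Gen.
Variable T : finType.
Implicit Types (G : dgraph T) (S H : {set T}).

Lemma zip_behead_ok (s : seq T) a b :
  uniq s -> (a, b) \in zip s (behead s) -> [/\ a \in s, b \in s & a != b].
Proof.
elim: s => [|x [|y s] IH] //= /andP[xn u].
rewrite in_cons => /orP[/eqP[-> ->]|H].
  split; rewrite ?in_cons ?eqxx ?orbT //.
  by apply: contraNneq xn => ->; rewrite in_cons eqxx.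
have [h1 h2 h3] := IH u H.
by split=> //; rewrite in_cons ?h1 ?h2 orbT.
Qed.

Lemma mem_interiors S p : (p \in interiors S) = uniq p && all (fun x => x \in S) p.
Proof.
apply/idP/idP.
  case/flattenP=> s /mapP[k _ ->] /mapP[t]; rewrite mem_enum => /andP[u a] ->.
  by rewrite u a.
move=> /andP[u a]; apply/flattenP.
exists (map val (enum [pred t : (size p).-tuple T | uniq t && all (fun x => x \in S) t])).
  apply/mapP; exists (size p) => //; rewrite mem_iota /= add0n ltnS.
  by rewrite -(card_uniqP u) max_card.
apply/mapP; exists (in_tuple p) => //; rewrite mem_enum; exact/andP.
Qed.

Lemma seqmin_le s a : a \in s -> (seqmin s <= a)%N.
Proof.
case: s => [|c cs] //=.
elim: cs a => [|d cs IH] a /=.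
  by rewrite inE => /eqP->.
rewrite !in_cons => /or3P[/eqP->|/eqP->|H].
- apply: leq_trans (geq_minr _ _) _; apply: IH; by rewrite in_cons eqxx.
- exact: geq_minl.
- apply: leq_trans (geq_minr _ _) _; apply: IH; by rewrite in_cons H orbT.
Qed.

Lemma seqmin_gt0 s : s != [::] -> all (fun a => 0 < a)%N s -> (0 < seqmin s)%N.
Proof.
case: s => [|c cs] //= _ /andP[c0].
elim: cs => [|d cs IH] //= /andP[d0 a].
by rewrite leq_min d0 IH.
Qed.

Lemma seqmin_nil s : (0 < seqmin s)%N -> s != [::].
Proof. by case: s. Qed.

Definition sim G G' := dV G = dV G' /\
  forall x y, x \in dV G -> y \in dV G -> x != y -> dw G x y = dw G' x y.

Lemma dedge_sim G G' : sim G G' -> dedge G =2 dedge G'.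
Proof.
move=> [eV ew] x y; rewrite /dedge -eV.
case xV: (x \in dV G); case yV: (y \in dV G); case: eqP => //= /eqP xy.
by rewrite ew.
Qed.

Lemma zeta_sim (R : comNzRingType) (q : R) G G' : sim G G' -> zeta q G = zeta q G'.
Proof.
move=> s; rewrite /zeta /ncomp.
have [eV _] := s.
by rewrite eV (eq_n_comp (eq_connect (dedge_sim s))).
Qed.

Lemma induced_sim G G' S : sim G G' -> sim (induced G S) (induced G' S).
Proof.
move=> [eV ew]; split; rewrite /= -eV //.
move=> x y xS yS xy; rewrite xS yS /=; apply: ew => //.
  by move: xS; rewrite inE => /andP[].
by move: yS; rewrite inE => /andP[].
Qed.

Lemma pr_sim m G G' : sim G G' -> sim (pr m G) (pr m G').
Proof.
move=> [eV ew]; split=> //= x y xV yV xy; by rewrite ew.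
Qed.

Lemma uniq_ends G S u p v :
  u \in dV G :\: S -> v \in dV G :\: S -> u != v -> p \in interiors (dV G :&: S) ->
  uniq (u :: rcons p v) /\ all (fun z => z \in dV G :&: S) p.
Proof.
move=> uV vV uv; rewrite mem_interiors => /andP[up ap]; split=> //.
rewrite /= rcons_uniq up mem_rcons in_cons negb_or uv /= andbT.
have nin z : z \in dV G :\: S -> z \notin p.
  rewrite inE => /andP[zS _]; apply/negP => /(allP ap).
  by rewrite inE (negPf zS) andbF.
by rewrite !nin.
Qed.

Definition bounded N G := forall x y, x \in dV G -> y \in dV G -> x != y -> (dw G x y <= N)%N.

Lemma sim_sym G G' : sim G G' -> sim G' G.
Proof. by move=> [eV ew]; split=> // x y; rewrite -eV => xV yV xy; rewrite ew. Qed.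

Lemma pr_bounded_sim N m G : bounded N G -> (N <= m)%N -> sim (pr m G) G.
Proof.
move=> b Nm; split=> //= x y xV yV xy.
by rewrite (leq_trans (b _ _ xV yV xy) Nm).
Qed.

Lemma bounded_induced N G S : bounded N G -> bounded N (induced G S).
Proof.
move=> b x y /= xV yV xy; rewrite xV yV /=.
by apply: b => //; [move: xV | move: yV]; rewrite inE => /andP[].
Qed.

Lemma path_edges_ok G S u p v :
  u \in dV G :\: S -> v \in dV G :\: S -> u != v -> p \in interiors (dV G :&: S) ->
  forall a b, (a, b) \in path_edges u p v -> [/\ a \in dV G, b \in dV G & a != b].
Proof.
move=> uV vV uv; rewrite mem_interiors => /andP[up ap] a b ab.
have us : uniq (u :: rcons p v).
  rewrite /= rcons_uniq up mem_rcons in_cons negb_or uv /= andbT.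
  have nin z : z \in dV G :\: S -> z \notin p.
    rewrite inE => /andP[zS _]; apply/negP => /(allP ap).
    by rewrite inE (negPf zS) andbF.
  by rewrite !nin.
have [h1 h2 h3] := zip_behead_ok us ab.
have sub z : z \in u :: rcons p v -> z \in dV G.
  rewrite in_cons mem_rcons in_cons => /or3P[/eqP->|/eqP->|/(allP ap)].
  - by move: uV; rewrite inE => /andP[].
  - by move: vV; rewrite inE => /andP[].
  by rewrite inE => /andP[].
by rewrite !sub.
Qed.

Lemma quot_sim G G' S : sim G G' -> sim (quot G S) (quot G' S).
Proof.
move=> [eV ew]; split; rewrite /= -eV //.
move=> x y xV yV xy; rewrite xV yV xy /=; congr seqmin.
rewrite /path_weights -eV.
have E p : p \in interiors (dV G :&: S) ->
   path_valid G x p y = path_valid G' x p y /\ path_weight G x p y = path_weight G' x p y.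
  move=> pI; have ok := path_edges_ok xV yV xy pI.
  split.
    apply: eq_in_all => -[a b] /ok [h1 h2 h3]; by rewrite /= ew.
  rewrite /path_weight; congr sumn; apply/eq_in_map => -[a b] /ok [h1 h2 h3].
  by rewrite /= ew.
rewrite (@eq_in_filter _ (fun p => path_valid G x p y) (fun p => path_valid G' x p y)).
  by apply/eq_in_map => p; rewrite mem_filter => /andP[_ /E[]].
by move=> p /E[].
Qed.

Lemma zeta_comp_sim (R : comNzRingType) (q : R) m al G G' :
  sim G G' -> zeta_comp q m al G = zeta_comp q m al G'.
Proof.
elim: al G G' => [|a al IH] G G' s.
  by case: s => /= ->.
case: al IH => [|b al] IH.
  by rewrite /= (zeta_sim q s); case: s => ->.
rewrite /=; case: (s) => eV _.
apply: eq_big => [S|S _]; first by rewrite eV.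
congr (_ * _)%R; first exact: (zeta_sim q (pr_sim m (induced_sim S s))).
exact (IH _ _ (pr_sim m (quot_sim S s))).
Qed.

End Gen.

Section Walks.
Variable T : finType.
Variable e : rel T.
Implicit Types (G : dgraph T) (S H : {set T}).

Definition walkin H x p y := path e x (rcons p y) && all (fun z => z \in H) p.

Definition Inv G H :=
  (forall x y, x \in dV G -> y \in dV G -> x != y ->
     (0 < dw G x y)%N <-> exists p, walkin H x p y) /\
  (forall x y p, x \in dV G -> y \in dV G -> x != y -> walkin H x p y ->
     (dw G x y <= (size p).+1)%N).

Lemma shorten_ex x p : path e x p ->
  exists p', [/\ path e x p', uniq (x :: p'), {subset p' <= p} & last x p' = last x p].
Proof. by move=> h; case: (shortenP h) => p' a b c; exists p'. Qed.

Lemma ar1 (a b : nat) : (a.+1 + (size (@nil T) + b + 1) <= a + b.+1 + 1)%N.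
Proof. rewrite /=; lia. Qed.
Lemma ar2 (a b : nat) : (a.+1 + b + 1 <= a + b.+1 + 1)%N.
Proof. lia. Qed.

Lemma pv_cons G x z s y :
  path_valid G x (z :: s) y = (0 < dw G x z)%N && path_valid G z s y.
Proof. by []. Qed.

Lemma pw_cons G x z s y :
  path_weight G x (z :: s) y = (dw G x z + path_weight G z s y)%N.
Proof. by []. Qed.

Lemma split_walk G H S y : Inv G H -> S \subset dV G -> y \in dV G ->
  forall p x pre, x \in dV G -> all (fun z => z \in H) pre ->
  all (fun z => z \in H :|: S) p -> path e x (pre ++ rcons p y) ->
  uniq (x :: pre ++ rcons p y) ->
  path_valid G x [seq z <- p | z \in S] y &&
  (path_weight G x [seq z <- p | z \in S] y <= size pre + size p + 1)%N.
Proof.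
move=> [Ib Ic] SV yV; elim=> [|z p IH] x pre xV aH ap pth u.
  have xy : x != y.
    move: u => /= /andP[xn _]; apply: contraNneq xn => ->.
    by rewrite mem_cat mem_seq1 eqxx orbT.
  have w : walkin H x pre y by rewrite /walkin -cats1 pth aH.
  rewrite /path_valid /path_weight /= andbT !addn0 addn1 (Ic _ _ _ xV yV xy w) andbT.
  by apply/(Ib _ _ xV yV xy); exists pre.
move: ap => /andP[zHS ap].
have u2 : uniq (z :: rcons p y).
  by move: u => /= /andP[_]; rewrite cat_uniq => /and3P[].
have e1 : pre ++ rcons (z :: p) y = rcons pre z ++ rcons p y by rewrite cat_rcons.
move: pth u; rewrite e1 cat_path last_rcons => /andP[pxz pzy] u.
have xz : x != z.
  move: u => /= /andP[xn _]; apply: contraNneq xn => ->.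
  by rewrite mem_cat mem_rcons mem_head.
rewrite /=; case: ifP => zS.
  have zV : z \in dV G by apply: (subsetP SV).
  have w : walkin H x pre z by rewrite /walkin pxz aH.
  have /andP[v1 w1] := IH z [::] zV isT ap pzy u2.
  rewrite pv_cons pw_cons v1 andbT.
  have -> : (0 < dw G x z)%N by apply/(Ib _ _ xV zV xz); exists pre.
  rewrite andTb; apply: leq_trans (leq_add (Ic _ _ _ xV zV xz w) w1) _.
  exact: ar1.
have zH : z \in H by move: zHS; rewrite inE zS orbF.
have := IH x (rcons pre z) xV _ ap _ u.
rewrite all_rcons zH aH cat_path last_rcons pxz pzy size_rcons => /(_ isT isT).
case/andP=> -> /= h; apply: leq_trans h _.
exact: ar2.
Qed.


Lemma pw_pos G x s y : path_valid G x s y -> (0 < path_weight G x s y)%N.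
Proof.
by case: s => [|z s]; rewrite /path_valid /path_weight /= => /andP[h _]; rewrite addn_gt0 h.
Qed.

Lemma concat_walk G H S y : Inv G H -> y \in dV G ->
  forall s x, x \in dV G -> uniq (x :: rcons s y) ->
  all (fun z => z \in dV G :&: S) s -> path_valid G x s y ->
  exists p, walkin (H :|: S) x p y.
Proof.
move=> [Ib _] yV; elim=> [|z s IH] x xV u aS pv.
  have xy : x != y by move: u => /= /andP[]; rewrite mem_seq1.
  have d0 : (0 < dw G x y)%N by move: pv => /andP[].
  have [p /andP[pp ap]] := (Ib _ _ xV yV xy).1 d0.
  exists p; rewrite /walkin pp /=; apply: sub_all ap => w; rewrite inE => ->.
  done.
move: pv; rewrite pv_cons => /andP[dxz pv'].
move: aS => /andP[zin as'].
have zV : z \in dV G by move: zin; rewrite inE => /andP[].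
have zS : z \in S by move: zin; rewrite inE => /andP[].
have xz : x != z by move: u => /= /andP[]; rewrite in_cons negb_or => /andP[].
have u' : uniq (z :: rcons s y) by move: u => /= /andP[_].
have [p2 /andP[pp2 ap2]] := IH z zV u' as' pv'.
have [p1 /andP[pp1 ap1]] := (Ib _ _ xV zV xz).1 dxz.
exists (p1 ++ z :: p2).
rewrite /walkin rcons_cat /= -cat_rcons cat_path last_rcons pp1 pp2 all_cat /= ap2.
rewrite andbT; apply/andP; split; last by rewrite inE zS orbT.
by apply: sub_all ap1 => w; rewrite inE => ->.
Qed.

Lemma reach G H S x y p : Inv G H -> S \subset dV G ->
  x \in dV G :\: S -> y \in dV G :\: S -> x != y -> walkin (H :|: S) x p y ->
  exists2 s, s \in interiors (dV G :&: S) &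
    path_valid G x s y && (path_weight G x s y <= (size p).+1)%N.
Proof.
move=> I SV xVS yVS xy /andP[pth ap].
have xV : x \in dV G by move: xVS; rewrite inE => /andP[].
have yV : y \in dV G by move: yVS; rewrite inE => /andP[].
have [p0 [pth0 u0 sub0 l0]] := shorten_ex pth.
rewrite last_rcons in l0.
move: pth0 u0 sub0 l0; case/lastP: p0 => [|p1 z] pth0 u0 sub0 l0.
  by move: xy; rewrite -l0 eqxx.
rewrite last_rcons in l0; subst z.
have yn : y \notin p1 by move: u0 => /= /andP[_]; rewrite rcons_uniq => /andP[].
have u1 : uniq p1 by move: u0 => /= /andP[_]; rewrite rcons_uniq => /andP[].
have sub1 : {subset p1 <= p}.
  move=> w wp; have := sub0 w; rewrite !mem_rcons !in_cons wp orbT => /(_ isT).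
  case/orP=> // /eqP wy; by move: yn; rewrite -wy wp.
have a1 : all (fun z => z \in H :|: S) p1 by apply/allP => w /sub1 /(allP ap).
exists [seq z <- p1 | z \in S].
  rewrite mem_interiors filter_uniq //=; apply/allP => w; rewrite mem_filter.
  by case/andP=> wS _; rewrite inE wS (subsetP SV).
have /andP[-> h] := @split_walk G H S y I SV yV p1 x [::] xV isT a1 pth0 u0.
apply: leq_trans h _; rewrite /= add0n addn1 ltnS.
exact: uniq_leq_size.
Qed.

Lemma Inv_quot G H S : Inv G H -> S \subset dV G -> Inv (quot G S) (H :|: S).
Proof.
move=> I SV; have [Ib Ic] := I; split.
  move=> x y /= xVS yVS xy; rewrite xVS yVS xy /=.
  have xV : x \in dV G by move: xVS; rewrite inE => /andP[].
  have yV : y \in dV G by move: yVS; rewrite inE => /andP[].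
  split.
    move=> /seqmin_nil; case E: (path_weights G S x y) => [|w ws] // _.
    have : w \in path_weights G S x y by rewrite E mem_head.
    case/mapP => s; rewrite mem_filter => /andP[pv sI] _.
    have [u a] := uniq_ends xVS yVS xy sI.
    exact: (concat_walk I yV xV u a pv).
  case=> p w; have [s sI /andP[pv _]] := reach I SV xVS yVS xy w.
  apply: seqmin_gt0.
    apply/eqP => E; have : path_weight G x s y \in path_weights G S x y.
      by apply/mapP; exists s => //; rewrite mem_filter pv sI.
    by rewrite E.
  apply/allP => a /mapP[s']; rewrite mem_filter => /andP[pv' _] ->.
  exact: pw_pos.
move=> x y p /= xVS yVS xy w; rewrite xVS yVS xy /=.
have [s sI /andP[pv h]] := reach I SV xVS yVS xy w.
apply: leq_trans h; apply: seqmin_le.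
by apply/mapP; exists s => //; rewrite mem_filter pv sI.
Qed.

Lemma Inv_init : (forall x, ~~ e x x) ->
  Inv (dec_one e) set0.
Proof.
move=> irr; split.
  move=> x y _ _ xy /=; rewrite lt0b; split.
    by move=> h; exists [::]; rewrite /walkin /= h.
  case=> -[|z p]; rewrite /walkin /= ?andbT // => /andP[_].
  by rewrite inE.
move=> x y p _ _ _ _ /=; exact: leq_trans (leq_b1 _) _.
Qed.

End Walks.

Section MinWalk.
Variable T : finType.
Variable e : rel T.
Hypothesis irr : forall x, ~~ e x x.
Hypothesis sym : forall x y, e x y = e y x.

Lemma last_take (x : T) q i : (i <= size q)%N -> last x (take i q) = nth x (x :: q) i.
Proof.
elim: q x i => [|a q IH] x [|i] //= h.
rewrite IH //; case: i h => [|i] h //=.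
by apply: set_nth_default.
Qed.

Lemma path_take x q k : path e x q -> path e x (take k q).
Proof. by rewrite -{1}(cat_take_drop k q) cat_path => /andP[]. Qed.

Lemma path_drop x q k : path e x q -> (k <= size q)%N -> path e (nth x (x :: q) k) (drop k q).
Proof.
by move=> h hk; move: h; rewrite -{1}(cat_take_drop k q) cat_path last_take // => /andP[].
Qed.

Lemma path_adj x q k : path e x q -> (k < size q)%N ->
  e (nth x (x :: q) k) (nth x (x :: q) k.+1).
Proof. by move=> /(pathP x) h /h. Qed.

Lemma ar_a (j n : nat) : (j <= n.+1)%N -> (j.-1 <= n)%N.
Proof. lia. Qed.
Lemma ar_b (i j n : nat) : (i.+1 < j)%N -> (j <= n.+1)%N -> (i <= n)%N.
Proof. lia. Qed.
Lemma ar_c (i j n : nat) : (i.+1 < j)%N -> (j <= n.+1)%N -> (j.-1 < n.+1)%N.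
Proof. lia. Qed.
Lemma nth_pred (x : T) q j : (0 < j)%N -> nth x q j.-1 = nth x (x :: q) j.
Proof. by case: j. Qed.

Lemma ar3 (i j n : nat) : (i.+1 < j)%N -> (j <= n.+1)%N -> (i + (n - j.-1) < n)%N.
Proof. lia. Qed.

Lemma min_walk_A (A : pred T) x y p :
  path e x (rcons p y) -> all A p ->
  (forall p', path e x (rcons p' y) -> all A p' -> (size p <= size p')%N) ->
  forall i j, (i < j)%N -> (j < size (x :: rcons p y))%N ->
  e (nth x (x :: rcons p y) i) (nth x (x :: rcons p y) j) -> j = i.+1.
Proof.
move=> pth ap mn i j ij jn eij.
have [lt|ge] := ltnP i.+1 j; last by apply/eqP; rewrite eqn_leq ge ij.
exfalso.
set q := rcons p y.
have sq : size q = (size p).+1 by rewrite size_rcons.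
move: jn; rewrite /= sq ltnS => jn.
set p' := take i p ++ drop j.-1 p.
have jp : (j.-1 <= size p)%N by apply: ar_a.
have ip : (i <= size p)%N by apply: ar_b lt jn.
have E : rcons p' y = take i q ++ drop j.-1 q.
  by rewrite /p' rcons_cat /q drop_rcons //; congr (_ ++ _); rewrite -cats1 takel_cat.
have pth' : path e x (rcons p' y).
  rewrite E cat_path path_take //= last_take; last by rewrite sq; apply: leqW.
  rewrite (drop_nth x); last by rewrite sq; exact: (ar_c lt jn).
  rewrite (nth_pred x q (leq_ltn_trans (leq0n i) ij)) /= eij /=.
  rewrite prednK; last exact: (leq_ltn_trans (leq0n i) ij).
  by apply: path_drop; rewrite // sq.
have ap' : all A p'.
  apply/allP => z; rewrite mem_cat => /orP[/mem_take|/mem_drop] /(allP ap) //.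
have := mn _ pth' ap'; rewrite size_cat size_takel // size_drop.
have h1 := ar3 lt jn => h2.
by move: (leq_ltn_trans h2 h1); rewrite ltnn.
Qed.


Lemma nth_last_y (x y : T) p : nth x (x :: rcons p y) (size p).+1 = y.
Proof. by rewrite /= nth_rcons ltnn eqxx. Qed.

Lemma min_walk_neq (A : pred T) x y p : x != y ->
  path e x (rcons p y) -> all A p ->
  (forall p', path e x (rcons p' y) -> all A p' -> (size p <= size p')%N) ->
  forall i j, (i < j)%N -> (j < size (x :: rcons p y))%N ->
  nth x (x :: rcons p y) i != nth x (x :: rcons p y) j.
Proof.
move=> xy pth ap mn i j ij jw; apply/negP => /eqP eq.
have A' := min_walk_A pth ap mn.
have sw : size (x :: rcons p y) = (size p).+2 by rewrite /= size_rcons.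
have [hj|hj] := ltnP j.+1 (size (x :: rcons p y)).
  have jq : (j < size (rcons p y))%N by move: hj; rewrite /= ltnS.
  have := path_adj pth jq; rewrite -eq => /(A' _ _ (leqW ij) hj) [] eji.
  by move: ij; rewrite eji ltnn.
have ej : j = (size p).+1 by apply/eqP; rewrite eqn_leq -ltnS -sw jw /= -ltnS -sw.
move: eq; rewrite ej nth_last_y; case: i ij => [|i'] ij.
  by move=> /= exy; move: xy; rewrite exy eqxx.
move=> eq.
have adj := path_adj pth (_ : i' < size (rcons p y))%N.
have i's : (i' < size (rcons p y))%N by rewrite size_rcons -ltnS -ej ltnW.
have adj' : e (nth x (x :: rcons p y) i') (nth x (x :: rcons p y) j).
  by rewrite ej nth_last_y; move: (adj i's); rewrite eq.
have h := A' _ _ (ltnW ij) jw adj'.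
by move: ij; rewrite h ltnn.
Qed.

Lemma min_walk_rel (A : pred T) x y p : x != y ->
  path e x (rcons p y) -> all A p ->
  (forall p', path e x (rcons p' y) -> all A p' -> (size p <= size p')%N) ->
  forall i j, (i < size (x :: rcons p y))%N -> (j < size (x :: rcons p y))%N ->
  e (nth x (x :: rcons p y) i) (nth x (x :: rcons p y) j) = (i.+1 == j) || (j.+1 == i).
Proof.
move=> xy pth ap mn.
have A' := min_walk_A pth ap mn.
have key i j : (i < j)%N -> (j < size (x :: rcons p y))%N ->
    e (nth x (x :: rcons p y) i) (nth x (x :: rcons p y) j) = (i.+1 == j).
  move=> ij jw; case: eqP => [ej|ne].
    have jw' : (i < size (rcons p y))%N by move: jw; rewrite -ej /= ltnS.
    rewrite -ej.
    by rewrite (path_adj pth jw').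
  by apply/negP => /(A' _ _ ij jw) h; apply: ne; rewrite h.
move=> i j iw jw; case: (ltngtP i j) => [ij|ji|->].
- by rewrite key // (gtn_eqF (leqW ij)) orbF.
- by rewrite sym key // (gtn_eqF (leqW ji)).
- by rewrite (negPf (irr _)) (gtn_eqF (ltnSn j)).
Qed.

Lemma min_walk_induced (A : pred T) x y p : x != y ->
  path e x (rcons p y) -> all A p ->
  (forall p', path e x (rcons p' y) -> all A p' -> (size p <= size p')%N) ->
  induces_path e [set z in x :: rcons p y] /\ #|[set z in x :: rcons p y]| = (size p).+2.
Proof.
move=> xy pth ap mn.
set w := x :: rcons p y.
have u : uniq w.
  apply/(uniqP x) => i j /= iw jw eq.
  case: (ltngtP i j) => [ij|ji|//].
    by move: (min_walk_neq xy pth ap mn ij jw); rewrite eq eqxx.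
  by move: (min_walk_neq xy pth ap mn ji iw); rewrite eq eqxx.
have cM : #|[set z in w]| = size w by rewrite cardsE; apply/card_uniqP.
split; last by rewrite cM /w /= size_rcons.
exists (fun i : 'I_#|[set z in w]| => nth x w i); split.
- move=> i j /eqP; rewrite nth_uniq ?cM ?ltn_ord // -?cM ?ltn_ord // => /eqP.
  exact: val_inj.
- by move=> i; rewrite inE mem_nth // -cM ltn_ord.
- move=> i j; rewrite (min_walk_rel xy pth ap mn) -?cM ?ltn_ord //.
Qed.

End MinWalk.

Lemma ar4 (d m K : nat) : (d <= m.+1)%N -> (m.+2 <= K)%N -> (d <= K - 1)%N.
Proof. lia. Qed.

Lemma Inv_bound (T : finType) (e : rel T) G H K :
  (forall x, ~~ e x x) -> (forall x y, e x y = e y x) ->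
  (forall M' : {set T}, induces_path e M' -> (#|M'| <= K)%N) ->
  Inv e G H -> bounded (K - 1) G.
Proof.
move=> irr sym mx [Ib Ic] x y xV yV xy.
case: (posnP (dw G x y)) => [->//|d0].
have [p0 w0] := (Ib _ _ xV yV xy).1 d0.
pose P := fun n => [exists t : n.-tuple T, walkin e H x t y].
have exP : exists n, P n by exists (size p0); apply/existsP; exists (in_tuple p0).
case: (ex_minnP exP) => m /existsP[t wt] mn.
have h1 := Ic _ _ _ xV yV xy wt.
move: (wt) => /andP[pt aT].
have mn' : forall p', path e x (rcons p' y) -> all (fun z => z \in H) p' -> (size t <= size p')%N.
  move=> p' pp ap'; rewrite size_tuple; apply: mn; apply/existsP; exists (in_tuple p').
  by rewrite /walkin pp ap'.
have [ind cM] := min_walk_induced irr sym xy pt aT mn'.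
have := mx _ ind; rewrite cM => h2.
exact: ar4 h1 h2.
Qed.

Lemma main_eq (T : finType) (e : rel T) (R : comNzRingType) (q : R) K m m' :
  (forall x, ~~ e x x) -> (forall x y, e x y = e y x) ->
  (forall M' : {set T}, induces_path e M' -> (#|M'| <= K)%N) ->
  (K - 1 <= m)%N -> (K - 1 <= m')%N ->
  forall al G H, Inv e G H -> zeta_comp q m al G = zeta_comp q m' al G.
Proof.
move=> irr sym mx hm hm'.
elim=> [|a al IH] G H I //.
case: al IH => [|b al] IH //.
rewrite /=; apply: eq_bigr => S /andP[SV _].
have bG := Inv_bound irr sym mx I.
congr (_ * _)%R.
  rewrite (zeta_sim q (pr_bounded_sim (@bounded_induced _ _ _ S bG) hm)).
  by rewrite (zeta_sim q (pr_bounded_sim (@bounded_induced _ _ _ S bG) hm')).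
have IQ := Inv_quot I SV.
have bQ := Inv_bound irr sym mx IQ.
transitivity (zeta_comp q m (b :: al) (quot G S)).
  exact (zeta_comp_sim q m (b :: al) (pr_bounded_sim bQ hm)).
transitivity (zeta_comp q m' (b :: al) (quot G S)).
  exact (IH _ _ IQ).
exact (zeta_comp_sim q m' (b :: al) (sim_sym (pr_bounded_sim bQ hm'))).
Qed.

Theorem mainTheorem3 (n : nat) (e : rel 'I_n) (M : {set 'I_n})
  (R : comNzRingType) (q : R) :
  simple_graph e -> connected_graph e ->
  induces_path e M ->
  (forall M' : {set 'I_n}, induces_path e M' -> (#|M'| <= #|M|)%N) ->
  forall k : nat, (#|M| <= k)%N ->
    Psi k q (dec_one e) = Psi (#|M| - 1) q (dec_one e).
Proof.
move=> [irr sym] _ _ mx k hk.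
apply: functional_extensionality => al.
rewrite /Psi; case: ifP => // _.
apply: (main_eq q irr sym mx _ (leqnn _) al (Inv_init irr)).
exact: leq_trans (leq_subr 1 _) hk.
Qed.
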